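(* Let $T$ be a tree with diameter $d$, and let $k$ be an integer with $1\le k\le d-1$. Then the $k$th power $T^k$ contains a $(k+1)^+$-branching spanning tree.
   Context: All graphs are finite, simple, undirected. In a tree, vertices of degree $1$ are leaves and all other vertices are internal vertices. For an integer $m$, a tree is $m^+$-branching if every internal vertex has degree at least $m$. For a graph $G=(V,E)$ and $k\in\mathbb{N}$, the $k$th power $G^k$ is the graph on vertex set $V$ in which $u\ne v$ are adjacent iff $d_G(u,v)\le k$ (distance in $G$). The diameter is the maximum distance between two vertices. *)

(* Defs.v *)
(* A finite simple graph on a finite vertex type V is a
   symmetric irreflexive relation e : rel V; the vertex set is all of V. *)
From mathcomp Require Import all_boot.
Set Implicit Arguments. Unset Strict Implicit. Unset Printing Implicit Defensive.

Section Graphs.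
Variable V : finType.

Definition simple_graph (e : rel V) : Prop := symmetric e /\ irreflexive e.

Definition dist_le (e : rel V) (n : nat) (x y : V) : Prop :=
  exists p : seq V, [/\ path e x p, last x p = y & size p <= n].

Definition is_dist (e : rel V) (x y : V) (n : nat) : Prop :=
  dist_le e n x y /\ forall m, dist_le e m x y -> n <= m.

Definition connected_graph (e : rel V) : Prop :=
  forall x y : V, exists n, dist_le e n x y.

Definition acyclic (e : rel V) : Prop :=
  forall c : seq V, 3 <= size c -> uniq c -> ~~ cycle e c.

Definition is_tree (e : rel V) : Prop :=
  simple_graph e /\ connected_graph e /\ acyclic e.

Definition diameter_is (e : rel V) (d : nat) : Prop :=
  (forall x y, exists n, is_dist e x y n /\ n <= d) /\
  (exists x y, is_dist e x y d).

Definition deg (e : rel V) (x : V) : nat := #|[set y | e x y]|.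

Definition is_leaf (e : rel V) (x : V) : bool := deg e x == 1.

Definition branching_plus (m : nat) (e : rel V) : Prop :=
  forall x, ~~ is_leaf e x -> m <= deg e x.

Definition power_adj (e : rel V) (k : nat) (x y : V) : Prop :=
  x != y /\ dist_le e k x y.

Definition spanning_tree_of (G : V -> V -> Prop) (f : rel V) : Prop :=
  is_tree f /\ forall x y, f x y -> G x y.

End Graphs.

(* Main.v *)
Require Import Defs.
From mathcomp Require Import zify.
From mathcomp Require Import all_boot.
From Stdlib Require Import ClassicalEpsilon.
Set Implicit Arguments. Unset Strict Implicit. Unset Printing Implicit Defensive.

Section Gen.
Variable V : finType.
Variable e : rel V.

Lemma dl_refl x : dist_le e 0 x x.
Proof. by exists [::]. Qed.

Lemma dl_weak n m x y : n <= m -> dist_le e n x y -> dist_le e m x y.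
Proof. move=> nm [p [h1 h2 h3]]; exists p; split => //; lia. Qed.

Lemma dl_cons n x y z : e x y -> dist_le e n y z -> dist_le e n.+1 x z.
Proof. move=> exy [p [h1 h2 h3]]; exists (y :: p); split => /=; [by rewrite exy | by [] | lia]. Qed.

Lemma dl_cat m n x y z : dist_le e m x y -> dist_le e n y z -> dist_le e (m+n) x z.
Proof.
move=> [p [h1 h2 h3]] [q [g1 g2 g3]]; exists (p ++ q); split.
- by rewrite cat_path h1 h2 g1.
- by rewrite last_cat h2.
- rewrite size_cat; lia.
Qed.

Lemma dl_one x y : e x y -> dist_le e 1 x y.
Proof. by move=> h; apply: dl_cons h (dl_refl y). Qed.

Lemma dl_snoc n x y z : dist_le e n x y -> e y z -> dist_le e n.+1 x z.
Proof. move=> h1 h2; rewrite -addn1; exact: dl_cat h1 (dl_one h2). Qed.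

Lemma dl0 x y : dist_le e 0 x y -> x = y.
Proof. by move=> [[|a p] [h1 h2 h3]]. Qed.

Lemma dl_sym : symmetric e -> forall n x y, dist_le e n x y -> dist_le e n y x.
Proof.
move=> hs n x y [p [h1 h2 h3]].
elim: p x n h1 h2 h3 => [|a p IH] x n /= h1 h2 h3.
  by rewrite -h2; apply: dl_weak (dl_refl x).
move/andP: h1 => [exa h1].
have := IH a (size p) h1 h2 (leqnn _) => h.
apply: dl_weak (dl_snoc h _); first by lia.
by rewrite hs.
Qed.

Lemma dl_two n x y : dist_le e n x y -> x != y -> ~~ e x y -> 2 <= n.
Proof.
move=> [[|a [|b p]] [h1 h2 h3]] /= hxy hne.
- by move: h2 => /= h2; rewrite h2 eqxx in hxy.
- by move: h1 hne h2; rewrite /= andbT => h1 hne h2; rewrite -h2 h1 in hne.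
- by apply: leq_trans h3.
Qed.
End Gen.

Section Main.
Variables (V : finType) (e : rel V) (r : V).
Hypothesis esym : symmetric e.
Hypothesis eirr : irreflexive e.
Hypothesis econn : connected_graph e.
Hypothesis eacyc : acyclic e.

Definition dlb n x z : bool :=
  if excluded_middle_informative (dist_le e n x z) then true else false.

Lemma dlbP n x z : reflect (dist_le e n x z) (dlb n x z).
Proof. rewrite /dlb; case: excluded_middle_informative => h; by constructor. Qed.

Lemma ex_dep x : exists n, dlb n r x.
Proof. have [n h] := econn r x; exists n; exact/dlbP. Qed.

Definition dep x := ex_minn (ex_dep x).

Lemma dep_dl x : dist_le e (dep x) r x.
Proof. rewrite /dep; case: ex_minnP => n /dlbP h _; exact h. Qed.

Lemma dep_min x n : dist_le e n r x -> dep x <= n.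
Proof. rewrite /dep; case: ex_minnP => m _ hm h; apply: hm; exact/dlbP. Qed.

Lemma dep_lip x z n : dist_le e n x z -> dep z <= dep x + n.
Proof. move=> h; apply: dep_min; exact: dl_cat (dep_dl x) h. Qed.

Lemma dep_lip2 x z n : dist_le e n x z -> dep x <= dep z + n.
Proof. move=> h; apply: dep_lip; exact: dl_sym h. Qed.

Lemma dep0 x : (dep x == 0) = (x == r).
Proof.
apply/idP/idP.
- move/eqP => h; have := dep_dl x; rewrite h => /dl0 ->; by [].
- move/eqP ->; rewrite -leqn0; apply: dep_min; exact: dl_refl.
Qed.

Lemma dep_r : dep r = 0.
Proof. by apply/eqP; rewrite dep0. Qed.

Definition par x := odflt x [pick w | e w x && (dep w == (dep x).-1)].

Lemma par_spec x : x != r -> e (par x) x /\ dep x = (dep (par x)).+1.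
Proof.
move=> xr.
have : exists w, e w x && (dep w == (dep x).-1).
  have [p [h1 h2 h3]] := dep_dl x.
  move: h1 h2 h3; case/lastP: p => [|q w'] /=.
    by move=> _ h; rewrite h eqxx in xr.
  rewrite last_rcons rcons_path size_rcons => /andP [hq hw] hw'.
  rewrite hw' in hw => hs.
  exists (last r q); rewrite hw /=.
  have h1 : dep (last r q) <= size q by apply: dep_min; exists q.
  have h2 := dep_lip (dl_one hw).
  apply/eqP; lia.
move=> [w hw].
rewrite /par; case: pickP => [z /andP [h1 /eqP h2] | /(_ w)]; last by rewrite hw.
split => //=.
have : dep x != 0 by rewrite dep0.
lia.
Qed.

Lemma par_r : par r = r.
Proof.
rewrite /par; case: pickP => [z /andP [h1 /eqP h2] |] //=.
rewrite dep_r /= in h2; move/eqP: h2; rewrite dep0 => /eqP hz.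
by rewrite hz eirr in h1.
Qed.

Definition anc x i := iter i par x.

Lemma ancS x i : anc x i.+1 = anc (par x) i.
Proof. exact: iterSr. Qed.

Lemma ancS' x i : anc x i.+1 = par (anc x i).
Proof. by []. Qed.

Lemma anc0 x : anc x 0 = x.
Proof. by []. Qed.

Lemma dep_par x : dep (par x) = (dep x).-1.
Proof.
case: (eqVneq x r) => [->|xr]; first by rewrite par_r dep_r.
have [_ h] := par_spec xr; lia.
Qed.

Lemma dep_anc x i : dep (anc x i) = dep x - i.
Proof.
elim: i => [|i IH]; first by rewrite subn0.
rewrite ancS' dep_par IH; lia.
Qed.

Lemma anc_add x i j : anc x (i + j) = anc (anc x j) i.
Proof. exact: iterD. Qed.

Lemma dl_anc x i : i <= dep x -> dist_le e i (anc x i) x.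
Proof.
elim: i => [|i IH] hi; first exact: dl_refl.
have hr : anc x i != r by rewrite -dep0 dep_anc; lia.
have [h1 _] := par_spec hr.
rewrite ancS'; apply: dl_cons h1 (IH _); lia.
Qed.

Lemma anc_dep x : anc x (dep x) = r.
Proof. by apply/eqP; rewrite -dep0 dep_anc subnn. Qed.


Lemma upath_gen x j i : j + i <= dep x -> path e (anc x j) (map (anc x) (iota j.+1 i)).
Proof.
elim: i j => [|i IH] j hji //=.
have hr : anc x j != r by rewrite -dep0 dep_anc; lia.
have [h1 _] := par_spec hr.
rewrite esym h1 /=; apply: IH; lia.
Qed.

Lemma upath x i : i <= dep x -> path e x (map (anc x) (iota 1 i)).
Proof. move=> h; exact: (upath_gen (j:=0) h). Qed.

Lemma last_upath x i : last x (map (anc x) (iota 1 i)) = anc x i.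
Proof.
case: i => [|i] //.
by rewrite -[i.+1]addn1 iotaD map_cat last_cat /= addn1.
Qed.

Lemma anc_inj x i i' : i <= dep x -> i' <= dep x -> anc x i = anc x i' -> i = i'.
Proof. move=> h1 h2 h; have := congr1 dep h; rewrite !dep_anc; lia. Qed.

Lemma tree_edge a b : e a b -> (a != r) && (par a == b) || (b != r) && (par b == a).
Proof.
move=> eab; case: (boolP (_ || _)) => // hn; exfalso.
have Pex : exists i, [exists j : 'I_(dep b).+1, anc a i == anc b j].
  exists (dep a); apply/existsP; exists ord_max; by rewrite /= !anc_dep.
case: (ex_minnP Pex) => i0 /existsP [[j hjb] /= /eqP hij] hmin.
have hi0 : i0 <= dep a.
  apply: hmin; apply/existsP; exists ord_max; by rewrite /= !anc_dep.
have hjb' : j <= dep b by [].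
have la := dep_lip (dl_one eab).
have lb := dep_lip2 (dl_one eab).
have dij := congr1 dep hij; rewrite !dep_anc in dij.
have hi1 : 0 < i0.
  case: i0 hij hmin hi0 dij => [|i0] // hij _ _ dij.
  rewrite anc0 in hij.
  case: j hij hjb hjb' dij => [|[|j]] hij _ hjb' dij.
  - by rewrite anc0 in hij; rewrite hij eirr in eab.
  - case: (eqVneq b r) => hb.
      by move: eab; rewrite hij hb /= par_r eirr.
    by move: hn; rewrite hij /= hb eqxx /= orbT.
  - lia.
have hj1 : 0 < j.
  case: j hij hjb hjb' dij => [|j] // hij _ _ dij.
  rewrite anc0 in hij.
  case: i0 hij hmin hi0 dij hi1 => [|[|i0]] hij _ hi0 dij _ //.
  - case: (eqVneq a r) => ha.
      by move: eab; rewrite -hij ha /= par_r eirr.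
    by move: hn; rewrite -hij /= ha eqxx.
  - lia.
set A := map (anc a) (iota 1 i0).
set B := rev (map (anc b) (iota 0 j)).
have hs : 3 <= size (a :: A ++ B).
  rewrite /= size_cat /A /B size_rev !size_map !size_iota; lia.
have hu : uniq (a :: A ++ B).
  rewrite -cat_cons -[a :: A]/(map (anc a) (iota 0 i0.+1)) cat_uniq rev_uniq.
  apply/and3P; split.
  + rewrite map_inj_in_uniq ?iota_uniq // => u v; rewrite !mem_iota => hu hv.
    apply: anc_inj; lia.
  + apply/hasPn => z; rewrite mem_rev => /mapP [j' hj' ->].
    apply/negP => /mapP [i' hi' he].
    rewrite mem_iota in hj'; rewrite mem_iota in hi'.
    have hi'' : i0 <= i'.
      apply: hmin; apply/existsP.
      have hj'b : j' < (dep b).+1 by lia.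
      by exists (Ordinal hj'b); rewrite /= he.
    have ei : i' = i0 by lia.
    rewrite ei hij in he.
    have := anc_inj (i := j') _ hjb' he; lia.
  + rewrite map_inj_in_uniq ?iota_uniq // => u v; rewrite !mem_iota => hu hv.
    apply: anc_inj; lia.
suff hc : cycle e (a :: A ++ B) by have := eacyc hs hu; rewrite hc.
  rewrite /= rcons_cat cat_path; apply/andP; split.
    exact: upath.
  rewrite last_upath hij /B -rev_cons.
  have -> : anc b j = last a (map (anc b) (iota 0 j.+1)).
    by rewrite -[j.+1]addn1 iotaD map_cat last_cat /= add0n.
  have -> : a :: map (anc b) (iota 0 j) = belast a (map (anc b) (iota 0 j.+1)).
    by rewrite -[j.+1]addn1 iotaD map_cat /= cats1 belast_rcons.
  rewrite rev_path.
  rewrite (@eq_path _ _ e); last by move=> u v; rewrite esym.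
  rewrite /= eab /=.
  have := upath_gen (x := b) (j := 0) (i := j).
  by rewrite add0n; apply.
Qed.

Lemma edge_dep a b : e a b -> dep a != dep b.
Proof.
move/tree_edge => /orP [] /andP [hr /eqP hp].
- have [_ h] := par_spec hr; rewrite -hp h; lia.
- have [_ h] := par_spec hr; rewrite -hp h; lia.
Qed.

Definition desc v u := exists i, anc u i = v.

Lemma desc_step v w u : desc v w -> w != v -> e w u -> desc v u.
Proof.
move=> [i hi] hwv /tree_edge /orP [] /andP [hr /eqP hp].
- case: i hi => [|i] hi; first by move: hi; rewrite /anc /= => hi; rewrite hi eqxx in hwv.
  by exists i; rewrite -hp -ancS.
- by exists i.+1; rewrite ancS hp.
Qed.

Lemma cut v w z n : desc v w -> ~ desc v z -> dist_le e n w z ->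
  exists n1 n2, [/\ n1 + n2 <= n, dist_le e n1 w v & dist_le e n2 v z].
Proof.
move=> hd hnd [p [h1 h2 h3]].
elim: p w n hd h1 h2 h3 => [|u p IH] w n hd /= h1 h2 h3.
  by exfalso; apply: hnd; rewrite -h2.
case: (eqVneq w v) => [hwv|hwv].
  subst v; exists 0, n; split => //; first exact: dl_refl.
  by exists (u :: p).
move/andP: h1 => [ewu h1].
have hdu := desc_step hd hwv ewu.
have [n1 [n2 [g1 g2 g3]]] := IH u (size p) hdu h1 h2 (leqnn _).
exists n1.+1, n2; split => //; first lia.
exact: dl_cons ewu g2.
Qed.

Variable k : nat.
Hypothesis hk : 0 < k.

Definition ch x c := (c != r) && (par c == x).
Definition Hm := \max_(x : V) dep x.

Fixpoint tt n x := if n is n'.+1 then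
  (let mm := \max_(c | ch x c) (tt n' c).+1 in if k <= mm then 0 else mm) else 0.

Definition t x := tt Hm.+1 x.
Definition m x := \max_(c | ch x c) (t c).+1.
Definition sel x := (x != r) && (k <= m x).

Lemma ch_dep x c : ch x c -> dep c = (dep x).+1.
Proof. move=> /andP [hr /eqP hp]; have [_ h] := par_spec hr; by rewrite h hp. Qed.

Lemma ch_par x : x != r -> ch (par x) x.
Proof. by move=> h; rewrite /ch h eqxx. Qed.

Lemma dep_Hm x : dep x <= Hm.
Proof. exact: (leq_bigmax (F := dep)). Qed.

Lemma tt_stable n x : Hm - dep x < n -> tt n x = tt n.+1 x.
Proof.
elim: n x => [|n IH] x hn //=.
rewrite (@eq_bigr _ _ _ _ _ _ (fun c => (tt n c).+1) (fun c => (tt n.+1 c).+1)) //.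
move=> c hc; rewrite IH //; have := ch_dep hc; have := dep_Hm c; lia.
Qed.

Lemma t_def x : t x = if k <= m x then 0 else m x.
Proof.
rewrite /t /m /=.
rewrite (@eq_bigr _ _ _ _ _ _ (fun c => (tt Hm c).+1) (fun c => (tt Hm.+1 c).+1)) //.
move=> c hc; rewrite tt_stable //; have := ch_dep hc; have := dep_Hm c; lia.
Qed.

Lemma t_lt x : t x < k.
Proof. rewrite t_def; by case: (leqP k (m x)). Qed.

Lemma m_le x : m x <= k.
Proof. apply/bigmax_leqP => c _; exact: t_lt. Qed.

Lemma m_ge x c : ch x c -> (t c).+1 <= m x.
Proof. move=> h; exact: (@leq_bigmax_cond _ (ch x) (fun c => (t c).+1) c h). Qed.

Lemma m_arg x : 0 < m x -> exists c, ch x c /\ (t c).+1 = m x.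
Proof.
case: (pickP (ch x)) => [c0 hc0 | h0] hm.
  have hA : 0 < #|ch x| by apply/card_gt0P; exists c0.
  have [c hc he] := eq_bigmax_cond (fun c => (t c).+1) hA.
  by exists c; split => //; rewrite /m he.
by move: hm; rewrite /m big_pred0.
Qed.

Lemma t_unsel x : x != r -> ~~ sel x -> t x = m x.
Proof. by move=> hr; rewrite /sel hr t_def /=; case: (leqP k (m x)). Qed.

Lemma sel_r : ~~ sel r.
Proof. by rewrite /sel eqxx. Qed.

Lemma walkup x j : 0 < j -> j <= dep x -> (forall l, 0 < l < j -> ~~ sel (anc x l)) ->
  j <= m (anc x j).
Proof.
elim: j => [|j IH] // _ hjd hns.
have hz : anc x j != r by rewrite -dep0 dep_anc; lia.
rewrite ancS'; apply: leq_trans (m_ge (ch_par hz)).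
case: j IH hjd hns hz => [|j] IH hjd hns hz //.
rewrite t_unsel //; last by apply: hns; lia.
rewrite ltnS; apply: IH => //; first lia.
move=> l hl; apply: hns; lia.
Qed.

Fixpoint nsa n x : option V := if n is n'.+1 then
  (if sel (par x) then Some (par x) else nsa n' (par x)) else None.

Lemma nsa_some n x z : nsa n x = Some z ->
  exists i, [/\ 0 < i <= n, z = anc x i, sel z & forall l, 0 < l < i -> ~~ sel (anc x l)].
Proof.
elim: n x => [|n IH] x //=.
case: ifP => hs.
  by case=> <-; exists 1; split => // l; lia.
move/IH => [i [h1 h2 h3 h4]]; exists i.+1; split => //.
- lia.
- by rewrite ancS.
- move=> l hl; case: l hl => [|[|l]] hl //.
    by rewrite /anc /= hs.
  rewrite ancS; apply: h4; lia.
Qed.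

Lemma nsa_none n x : nsa n x = None -> forall l, 0 < l <= n -> ~~ sel (anc x l).
Proof.
elim: n x => [|n IH] x //=.
- move=> _ l; lia.
case: ifP => hs // /IH h [|[|l]] hl //.
  by rewrite /anc /= hs.
rewrite ancS; apply: h; lia.
Qed.

Lemma nsa_first n x i : 0 < i <= n -> sel (anc x i) ->
  (forall l, 0 < l < i -> ~~ sel (anc x l)) -> nsa n x = Some (anc x i).
Proof.
move=> hi hs hns.
case hn: (nsa n x) => [z|].
  have [i' [h1 h2 h3 h4]] := nsa_some hn.
  case: (ltngtP i i') => hii.
  - have hh : 0 < i < i' by lia.
    by move: (h4 i hh); rewrite hs.
  - have hh : 0 < i' < i by lia.
    by move: (hns i' hh); rewrite -h2 h3.
  - by rewrite h2 hii.
by move: (nsa_none hn hi); rewrite hs.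
Qed.

Variables (y : V) (D : nat).
Hypothesis hyD : dep y = D.
Hypothesis hkD : k < D.
Hypothesis hdiam : forall x, exists n, dist_le e n x y /\ n <= D.

Definition v j := anc y (D - j).

Lemma dep_v j : j <= D -> dep (v j) = j.
Proof. move=> h; rewrite /v dep_anc hyD; lia. Qed.

Lemma v0 : v 0 = r.
Proof. by rewrite /v subn0 -hyD anc_dep. Qed.

Lemma anc_v j l : l <= j -> j <= D -> anc (v j) l = v (j - l).
Proof. move=> h1 h2; rewrite /v -anc_add; congr anc; lia. Qed.

Lemma ex_p : exists j, (0 < j <= D) && sel (v j).
Proof.
case: (boolP [exists j : 'I_D.+1, (0 < j <= D) && sel (v j)]).
  by move/existsP => [j hj]; exists j.
move/existsPn => hn; exfalso.
have hD1 : D.-1 < D.+1 by lia.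
have hw := @walkup y D.-1.
have h1 : anc y D.-1 = v 1 by rewrite /v; congr anc; lia.
have hv1 : v 1 != r by rewrite -dep0 dep_v; lia.
have hs1 : ~~ sel (v 1).
  have h1D : 1 < D.+1 by lia.
  have := hn (Ordinal h1D); rewrite /=.
  by case: (D) hkD => [|D'] //=; lia.
have := m_le (v 1).
have : D.-1 <= m (v 1).
  rewrite -h1; apply: hw; try lia.
  move=> l hl.
  have hlD : D - l < D.+1 by lia.
  have := hn (Ordinal hlD); rewrite /= /v.
  have -> : D - (D - l) = l by lia.
  have -> : (0 < D - l <= D) = true by apply/andP; split; lia.
  by [].
move: hs1; rewrite /sel hv1 /= -ltnNge => hs1.
lia.
Qed.

Definition p := ex_minn ex_p.

Lemma p_spec : [/\ 0 < p <= D, sel (v p) & forall j, 0 < j < p -> ~~ sel (v j)].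
Proof.
rewrite /p; case: (ex_minnP ex_p) => q /andP [h1 h2] hmin; split => //.
move=> j hj; apply/negP => hs.
have := hmin j; rewrite hs andbT.
have -> : (0 < j <= D) = true by apply/andP; split; lia.
move=> /(_ isT); lia.
Qed.

Definition h := v p.

Lemma dep_h : dep h = p.
Proof. case: p_spec => hp _ _; apply: dep_v; lia. Qed.

Lemma p_le_k : p <= k.
Proof.
case: p_spec => hp hs hns.
case: (leqP p 1) => hp1; first lia.
have hv1 : v 1 != r by rewrite -dep0 dep_v; lia.
have hs1 : ~~ sel (v 1) by apply: hns; lia.
have : p.-1 <= m (v 1).
  have -> : v 1 = anc h p.-1 by rewrite /h anc_v; [congr v; lia | lia | lia].
  apply: walkup; rewrite ?dep_h; try lia.
  move=> l hl; rewrite /h anc_v; try lia.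
  apply: hns; lia.
move: hs1; rewrite /sel hv1 /= -ltnNge => hs1.
lia.
Qed.

Lemma h_top : nsa (dep h) h = None.
Proof.
case hn: nsa => [z|] //.
have [i [h1 h2 h3 h4]] := nsa_some hn.
case: p_spec => hp hs hns.
rewrite dep_h in h1.
rewrite h2 /h anc_v in h3; try lia.
case: (eqVneq i p) => hip.
  by move: h3; rewrite hip subnn v0 (negbTE sel_r).
have hh : 0 < p - i < p by lia.
by move: (hns _ hh); rewrite h3.
Qed.

Lemma sel_h : sel h.
Proof. by case: p_spec. Qed.

Lemma h_r : h != r.
Proof. by rewrite -dep0 dep_h; case: p_spec => hp _ _; lia. Qed.

Definition fp x := if nsa (dep x) x is Some z then z else h.
Definition rk x := if x == h then 0 else if nsa (dep x) x is Some _ then (dep x).+2 else 1.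

Lemma fp_h : fp h = h.
Proof. by rewrite /fp h_top. Qed.

Lemma rk_le x : rk x <= (dep x).+2.
Proof. rewrite /rk; case: eqP => // _; case: nsa => //. Qed.

Lemma fp_spec w : w = h \/ (fp w != w /\ rk (fp w) < rk w).
Proof.
case: (eqVneq w h) => hw; [by left | right].
rewrite /fp /rk (negbTE hw).
case hn: nsa => [z|].
  have [i [h1 h2 h3 h4]] := nsa_some hn.
  have hd : dep z = dep w - i by rewrite h2 dep_anc.
  split.
    by apply/eqP => hzw; move: hd; rewrite hzw; lia.
  apply: leq_ltn_trans (rk_le z) _; lia.
by rewrite eqxx; split => //; rewrite eq_sym.
Qed.

Lemma fp_neq w : w != h -> fp w != w.
Proof. by move=> hw; case: (fp_spec w) => [hh|[]//]; rewrite hh eqxx in hw. Qed.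

Lemma fp_img w : fp w = h \/ sel (fp w).
Proof.
rewrite /fp; case hn: nsa => [z|]; [right|by left].
by have [i [_ _ ?]] := nsa_some hn.
Qed.

Lemma geo x : nsa (dep x) x = None -> x != h -> dist_le e k x h.
Proof.
move=> htop hxh.
case: p_spec => hp hs hns.
have hk' := p_le_k.
pose Q j := (j <= dep x) && (j <= D) && (anc x (dep x - j) == v j).
have Q0 : exists j, Q j by exists 0; rewrite /Q /= subn0 anc_dep v0 eqxx.
have Qb : forall j, Q j -> j <= D by move=> j /andP [/andP [_ ?] _].
case: (ex_maxnP Q0 Qb) => q /andP [/andP [hqx hqD] /eqP hq] hmax.
have hqp : q < p.
  case: (ltnP q p) => // hpq; exfalso.
  have ha : anc x (dep x - p) = h.
    have -> : dep x - p = (q - p) + (dep x - q) by lia.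
    by rewrite anc_add hq anc_v ?subKn //; try lia.
  case: (eqVneq (dep x) p) => hdp.
    by move: ha; rewrite hdp subnn anc0 => hxh'; rewrite hxh' eqxx in hxh.
  have hl : 0 < dep x - p <= dep x by lia.
  by move: (nsa_none htop hl); rewrite ha sel_h.
have hxq : dep x - q <= q.
  case: (eqVneq q (dep x)) => hqdx; first lia.
  have hnq : ~~ Q q.+1 by apply/negP => /hmax; lia.
  have hqD' : q < D by lia.
  have hab : anc x (dep x - q.+1) != v q.+1.
    move: hnq; rewrite /Q.
    have -> : (q.+1 <= dep x) && (q.+1 <= D) = true by apply/andP; split; lia.
    by [].
  set a := anc x (dep x - q.+1) in hab *.
  set b := v q.+1 in hab *.
  have dab : dep a = q.+1 by rewrite /a dep_anc; lia.
  have dbb : dep b = q.+1 by rewrite dep_v.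
  have [n [hn hnD]] := hdiam x.
  have hd1 : desc a x by exists (dep x - q.+1).
  have hd2 : ~ desc a y.
    move=> [i hi].
    have := congr1 dep hi; rewrite dep_anc hyD dab => hi'.
    have : i = D - q.+1 by lia.
    by move=> hi2; move: hab; rewrite -hi hi2 eqxx.
  have [n1 [n2 [g1 g2 g3]]] := cut hd1 hd2 hn.
  have g3' := dl_sym esym g3.
  have hd3 : desc b y by exists (D - q.+1).
  have hd4 : ~ desc b a.
    move=> [i hi].
    have := congr1 dep hi; rewrite dep_anc dab dbb => hi'.
    have : i = 0 by lia.
    by move=> hi2; move: hab; rewrite -hi hi2 anc0 eqxx.
  have [n3 [n4 [f1 f2 f3]]] := cut hd3 hd4 g3'.
  have l1 := dep_lip2 g2.
  have l2 := dep_lip2 f2.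
  have l3 : 2 <= n4.
    have hba : b != a by rewrite eq_sym.
    have hnab : ~~ e b a by apply/negP => /edge_dep; rewrite dab dbb eqxx.
    exact: (dl_two f3 hba hnab).
  rewrite dab in l1; rewrite hyD dbb in l2.
  lia.
have w1 : dist_le e (dep x - q) x (v q).
  rewrite -hq; apply: dl_sym => //; apply: dl_anc; lia.
have w2 : dist_le e (p - q) (v q) h.
  have -> : v q = anc h (p - q) by rewrite /h anc_v; [congr v; lia | lia | lia].
  apply: dl_anc; rewrite dep_h; lia.
apply: dl_weak (dl_cat w1 w2); lia.
Qed.

Lemma fp_dist w : fp w != w -> dist_le e k w (fp w).
Proof.
move=> hne; move: hne; rewrite /fp.
case hn: nsa => [z|] hne.
  have [i [h1 h2 h3 h4]] := nsa_some hn.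
  have hik : i <= k.
    case: (leqP i k) => // hki; exfalso.
    have hw := @walkup w k hk.
    have hz : anc w k != r by rewrite -dep0 dep_anc; lia.
    have : k <= m (anc w k).
      apply: hw; first lia.
      move=> l hl; apply: h4; lia.
    move=> hm.
    have hl : 0 < k < i by lia.
    by move: (h4 k hl); rewrite /sel hz hm.
  rewrite h2; apply: dl_weak hik _; apply: dl_sym => //; apply: dl_anc; lia.
apply: geo => //; by rewrite eq_sym.
Qed.

Lemma chain v0 : sel v0 -> forall i, 0 < i <= k -> exists z,
  [/\ anc z i = v0, dep z = dep v0 + i, t z = k - i &
      forall l, 0 < l < i -> ~~ sel (anc z l)].
Proof.
move=> hs; have hm : m v0 = k.
  have := m_le v0; move: hs; rewrite /sel => /andP [_ ?]; lia.
elim=> [|i IH] // hi.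
case: i IH hi => [|i] IH hi.
  have [c [hc hct]] := m_arg (ltac:(lia) : 0 < m v0).
  exists c; split.
  - by move: hc => /andP [_ /eqP].
  - by rewrite (ch_dep hc) addn1.
  - lia.
  - move=> l; lia.
have [z [z1 z2 z3 z4]] := IH (ltac:(lia)).
have hzr : z != r by rewrite -dep0 z2; lia.
have hzs : ~~ sel z.
  apply/negP => hsz; move: z3; rewrite t_def.
  move: hsz; rewrite /sel => /andP [_ ->]; lia.
have hmz : m z = k - i.+1 by rewrite -t_unsel.
have [c [hc hct]] := m_arg (ltac:(lia) : 0 < m z).
have hpc : par c = z by move: hc => /andP [_ /eqP].
exists c; split.
- by rewrite ancS hpc.
- rewrite (ch_dep hc) z2; lia.
- lia.
- move=> l hl; case: l hl => [|[|l]] hl //.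
    by rewrite /anc /= hpc.
  rewrite ancS hpc; apply: z4; lia.
Qed.

Lemma chain_list x : sel x -> forall i, i <= k -> exists s : seq V,
  [/\ uniq s, size s = i & forall z, z \in s -> [/\ fp z = x, dep x < dep z & dep z <= dep x + i]].
Proof.
move=> hs; elim=> [|i IH] hi.
  by exists [::].
have [s [s1 s2 s3]] := IH (ltac:(lia)).
have [z [z1 z2 z3 z4]] := chain hs (ltac:(lia) : 0 < i.+1 <= k).
have hfz : fp z = x.
  rewrite /fp (@nsa_first _ _ i.+1) ?z1 //.
  rewrite z2; lia.
exists (z :: s); split => /=.
- rewrite s1 andbT; apply/negP => /s3 [_ _]; lia.
- by rewrite s2.
- move=> w; rewrite inE => /orP [/eqP ->|/s3 [w1 w2 w3]]; split => //; lia.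
Qed.

Definition f a b := (a != b) && ((fp a == b) || (fp b == a)).
Arguments f : simpl never.

Lemma f_sym : symmetric f.
Proof. by move=> a b; rewrite /f eq_sym orbC. Qed.

Lemma f_irr : irreflexive f.
Proof. by move=> a; rewrite /f eqxx. Qed.

Lemma f_up a b : f a b -> rk b <= rk a -> fp a = b.
Proof.
move=> /andP [hab /orP [/eqP //|/eqP hb]] hr.
case: (fp_spec b) => [hbh|[_ hr']].
  by move: hb; rewrite hbh fp_h => hh; rewrite -hh hbh eqxx in hab.
by rewrite hb in hr'; lia.
Qed.

Lemma to_h n x : rk x <= n -> exists l, dist_le f l x h.
Proof.
elim: n x => [|n IH] x hx.
  case: (fp_spec x) => [->|[_ ?]]; first by exists 0; exact: dl_refl.
  lia.
case: (fp_spec x) => [->|[hne hr]]; first by exists 0; exact: dl_refl.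
have [l hl] := IH (fp x) (ltac:(lia)).
exists l.+1; apply: dl_cons hl.
by rewrite /f eq_sym hne eqxx.
Qed.

Lemma f_conn : connected_graph f.
Proof.
move=> a b.
have [l1 h1] := to_h (leqnn (rk a)).
have [l2 h2] := to_h (leqnn (rk b)).
exists (l1 + l2); exact: dl_cat h1 (dl_sym f_sym h2).
Qed.

Lemma f_acyc : acyclic f.
Proof.
move=> c hs hu; apply/negP => hc.
case: c hs hu hc => [|x0 c'] // hs hu hc.
set c := x0 :: c' in hs hu hc.
have hx0 : x0 \in c by rewrite inE eqxx.
case: (arg_maxnP rk hx0) => z hz hmax.
case: (rot_to hz) => i s hrot.
have hc' : cycle f (z :: s) by rewrite -hrot rot_cycle.
have hu' : uniq (z :: s) by rewrite -hrot rot_uniq.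
have hs' : 3 <= size (z :: s) by rewrite -hrot size_rot.
have hmem : forall w, w \in z :: s -> w \in c by move=> w; rewrite -hrot mem_rot.
clear hrot; case: s hc' hu' hs' hmem => [|a s'] // hc' hu' hs' hmem.
case/lastP: s' hc' hu' hs' hmem => [|s'' b] // hc' hu' hs' hmem.
move: hc'; rewrite /= => /andP [hza]; rewrite rcons_path => /andP [_].
rewrite last_rcons => hbz.
have ha : rk a <= rk z by apply: hmax; apply: hmem; rewrite !inE ?eqxx ?orbT.
have hb : rk b <= rk z.
  by apply: hmax; apply: hmem; rewrite !inE mem_rcons !inE ?eqxx ?orbT.
have e1 := f_up hza ha.
have e2 := f_up (ltac:(by rewrite f_sym) : f z b) hb.
have hab : a = b by rewrite -e1 -e2.
move: hu' => /= /andP [_ /andP [ha' _]].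
by move: ha'; rewrite mem_rcons inE hab eqxx.
Qed.

Lemma deg_ge (g : rel V) x s : uniq s -> (forall z, z \in s -> g x z) -> size s <= deg g x.
Proof.
move=> hu hg; rewrite /deg -(card_uniqP hu); apply: subset_leq_card.
by apply/subsetP => z hz; rewrite inE; apply: hg.
Qed.

Lemma f_branch : branching_plus k.+1 f.
Proof.
move=> x hl.
case: (boolP (sel x)) => hs.
  have [s [s1 s2 s3]] := chain_list hs (leqnn k).
  have hfs : forall z, z \in s -> f x z.
    move=> z /s3 [z1 z2 _]; rewrite /f z1 eqxx orbT andbT.
    by apply/eqP => hxz; rewrite hxz in z2; lia.
  case: (eqVneq x h) => hxh.
    have hfr : fp r = h by rewrite /fp dep_r.
    have := @deg_ge f x (r :: s).
    rewrite /= s2; apply.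
      rewrite s1 andbT; apply/negP => /s3 [_ hd _]; move: hd; rewrite dep_r; lia.
    move=> z; rewrite inE => /orP [/eqP ->|/hfs //].
    by rewrite /f hxh hfr eqxx orbT andbT h_r.
  have hne := fp_neq hxh.
  have := @deg_ge f x (fp x :: s).
  rewrite /= s2; apply.
    rewrite s1 andbT; apply/negP => /s3 [w1 _ _].
    case: (fp_spec (fp x)) => [hh|[_ hr]].
      by move: w1; rewrite hh fp_h => hh'; rewrite hh' eqxx in hxh.
    case: (fp_spec x) => [hh|[_ hr']]; first by rewrite hh eqxx in hxh.
    rewrite w1 in hr; lia.
  move=> z; rewrite inE => /orP [/eqP ->|/hfs //].
  by rewrite /f eq_sym hne eqxx.
exfalso; move: hl; rewrite /is_leaf /deg.
have hxh : x != h by apply/negP => /eqP hxh; rewrite hxh sel_h in hs.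
have hne := fp_neq hxh.
have -> : [set z | f x z] = [set fp x].
  apply/setP => z; rewrite !inE /f.
  have -> : (fp z == x) = false.
    apply/negP => /eqP hz; case: (fp_img z) => [hh|hsz].
      by rewrite -hz hh eqxx in hxh.
    by rewrite hz in hsz; rewrite hsz in hs.
  rewrite orbF; case: (eqVneq z (fp x)) => [->|hz]; first by rewrite andbT eq_sym hne.
  by rewrite andbF.
by rewrite cards1.
Qed.

Lemma f_span : spanning_tree_of (power_adj e k) f.
Proof.
split; first by split; [split; [exact: f_sym | exact: f_irr] | split; [exact: f_conn | exact: f_acyc]].
move=> a b hab; split; first by move: hab => /andP [].
move: hab => /andP [hab /orP [/eqP ha | /eqP hb]].
- have hne : fp a != a by rewrite ha eq_sym.
  rewrite -ha; exact: fp_dist hne.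
- have hne : fp b != b by rewrite hb.
  rewrite -hb; exact: dl_sym esym _ _ _ (fp_dist hne).
Qed.
End Main.

Theorem mainTheorem1 (V : finType) (e : rel V) (d k : nat) :
  is_tree e -> diameter_is e d -> 1 <= k -> k <= d - 1 ->
  exists f : rel V,
    spanning_tree_of (power_adj e k) f /\ branching_plus k.+1 f.
Proof.
move=> [[esym eirr] [econn eacyc]] [hdiam [x0 [y0 [hxy hmin]]]] hk hkd.
have hyD : dep x0 econn y0 = d.
  apply/eqP; rewrite eqn_leq; apply/andP; split.
    exact: dep_min hxy.
  exact: hmin (dep_dl _ _ _).
have hkD : k < d by lia.
have hdiam' : forall x, exists n, dist_le e n x y0 /\ n <= d.
  move=> x; have [n [[h1 _] h2]] := hdiam x y0; by exists n.
exists (f eirr hk hyD hkD); split.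
- have hh := f_span esym eirr eacyc hk hyD hkD hdiam'; exact: hh.
- exact: f_branch.
Qed.
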